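(* Let $M$ be a connected molecular graph (i.e. a connected simple graph with maximum vertex degree at most $4$) with $n\geq 3$ vertices, and let $G\cong L(M)$ be its line graph. Then $GA(G)>ABC(G)$.
   Context: All graphs are finite, simple and undirected. For a graph $G$ with vertex degrees $d_i$ (degree of vertex $v_i$), the first geometric-arithmetic index is $GA(G)=\sum_{v_iv_j\in E(G)}\frac{2\sqrt{d_id_j}}{d_i+d_j}$ and the atom-bond connectivity index is $ABC(G)=\sum_{v_iv_j\in E(G)}\sqrt{\frac{d_i+d_j-2}{d_id_j}}$. The line graph $L(M)$ has vertex set $E(M)$, two vertices being adjacent iff the corresponding edges of $M$ share an endpoint. *)

(* Defs.v *)
From HB Require Import structures.
From mathcomp Require Import all_boot all_order all_algebra.
Set Implicit Arguments. Unset Strict Implicit. Unset Printing Implicit Defensive.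
Import Order.TTheory GRing.Theory Num.Theory.
Local Open Scope ring_scope.

Definition simple_graph (T : finType) (e : rel T) : Prop :=
  symmetric e /\ irreflexive e.

Definition deg (T : finType) (e : rel T) (x : T) : nat := #|[set y | e x y]|.

Definition connected_graph (T : finType) (e : rel T) : Prop :=
  forall x y : T, connect e x y.

(* Sum over the edges of a simple graph of a symmetric edge weight:
   each edge {x,y} is counted once (ordered pairs counted twice, halved). *)
Definition edge_sum (R : rcfType) (T : finType) (e : rel T)
    (w : nat -> nat -> R) : R :=
  2^-1 * \sum_(x : T) \sum_(y : T | e x y) w (deg e x) (deg e y).

Definition GA (R : rcfType) (T : finType) (e : rel T) : R :=
  edge_sum e (fun di dj : nat =>
    2 * Num.sqrt (di%:R * dj%:R) / (di%:R + dj%:R)).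

Definition ABC (R : rcfType) (T : finType) (e : rel T) : R :=
  edge_sum e (fun di dj : nat =>
    Num.sqrt ((di%:R + dj%:R - 2) / (di%:R * dj%:R))).

Definition edge_set (T : finType) (e : rel T) : {set {set T}} :=
  [set E | [exists x, exists y, e x y && (E == [set x; y])]].

Definition line_vertex (T : finType) (e : rel T) : finType :=
  {E : {set T} | E \in edge_set e}.

Definition line_adj (T : finType) (e : rel T) : rel (line_vertex e) :=
  fun E F => (E != F) && (val E :&: val F != set0).

(* Main.v *)
Require Import Defs.
From HB Require Import structures.
From mathcomp Require Import all_boot all_order all_algebra.
From mathcomp Require Import ring lra zify.
Import Order.TTheory GRing.Theory Num.Theory.
Local Open Scope ring_scope.

Section Num.
Variable R : rcfType.
Definition gaw (a b : nat) : R := 2 * Num.sqrt (a%:R * b%:R) / (a%:R + b%:R).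
Definition abcw (a b : nat) : R := Num.sqrt ((a%:R + b%:R - 2) / (a%:R * b%:R)).
Definition sw a b := gaw a b - abcw a b.

Lemma ga_ge (a b : nat) (r : R) : (0 < a)%N -> (0 < b)%N -> 0 <= r ->
  (r * (a%:R + b%:R)) ^+ 2 <= 4 * (a%:R * b%:R) -> r <= gaw a b.
Proof.
move=> a0 b0 r0 h.
have ha : 0 < (a%:R : R) by rewrite ltr0n.
have hb : 0 < (b%:R : R) by rewrite ltr0n.
have hab : 0 < (a%:R : R) + b%:R by lra.
rewrite /gaw ler_pdivlMr //.
set t := Num.sqrt _.
have t0 : 0 <= t := sqrtr_ge0 _.
have tt : t ^+ 2 = a%:R * b%:R by rewrite sqr_sqrtr // mulr_ge0 // ltW.
have h1 : 0 <= r * (a%:R + b%:R) by rewrite mulr_ge0 // ltW.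
rewrite -tt in h. nra.
Qed.

Lemma abc_le (a b : nat) (q : R) : (0 < a)%N -> (0 < b)%N -> 0 <= q ->
  a%:R + b%:R - 2 <= q ^+ 2 * (a%:R * b%:R) -> abcw a b <= q.
Proof.
move=> a0 b0 q0 h.
have ha : 0 < (a%:R : R) by rewrite ltr0n.
have hb : 0 < (b%:R : R) by rewrite ltr0n.
rewrite /abcw -(ger0_norm q0) -sqrtr_sqr ler_wsqrtr // ler_pdivrMr //.
by rewrite mulr_gt0.
Qed.

Lemma s_ge (a b : nat) (r q : R) : (0 < a)%N -> (0 < b)%N -> 0 <= r -> 0 <= q ->
  (r * (a%:R + b%:R)) ^+ 2 <= 4 * (a%:R * b%:R) ->
  a%:R + b%:R - 2 <= q ^+ 2 * (a%:R * b%:R) -> r - q <= sw a b.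
Proof.
move=> a0 b0 r0 q0 h1 h2; rewrite /sw lerB //.
  exact: ga_ge. exact: abc_le.
Qed.

Lemma s_mid a b : (2 <= a <= 6)%N -> (2 <= b <= 6)%N -> 1/8 <= sw a b.
Proof.
case: a => [|[|[|[|[|[|[|a]]]]]]] // _;
case: b => [|[|[|[|[|[|[|b]]]]]]] // _;
(apply: le_trans (s_ge _ _ (17/20) (71/100) _ _ _ _ _ _); [lra|by []|by []|lra|lra|lra|lra]).
Qed.
Definition ind (a b : nat) : R := if (a == 1%N) && (b == 4%N) then 1/5 else 0.
Definition uw a b := sw a b + ind a b - ind b a.

Ltac tryrq r q := match goal with |- context[sw ?a ?b] => have := s_ge a b r q isT isT ltac:(lra) ltac:(lra) ltac:(lra) ltac:(lra) end; lra.

Lemma u_pos a b : (1 <= a <= 6)%N -> (1 <= b <= 6)%N -> ((a == 1) ==> (b <= 4))%N ->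
  ((b == 1) ==> (a <= 4))%N -> ~~ ((a == 4) && (b == 1))%N -> 0 < uw a b.
Proof.
case: a => [|[|[|[|[|[|[|a]]]]]]] // _;
case: b => [|[|[|[|[|[|[|b]]]]]]] // _ // _ // _ // _;
rewrite /uw /ind /=;
first [ match goal with |- context[sw ?a ?b] => have := @s_mid a b isT isT end; lra
      | tryrq (1:R) (0:R) | tryrq (9/10:R) (71/100:R) | tryrq (17/20:R) (41/50:R) | tryrq (4/5:R) (9/10:R) ].
Qed.

Lemma u41 : -(3/10) <= uw 4 1.
Proof. rewrite /uw /ind /=. have := s_ge 4 1 (4/5) (9/10) isT isT ltac:(lra) ltac:(lra) ltac:(lra) ltac:(lra); lra. Qed.

Lemma u4k k : (2 <= k <= 6)%N -> 1/8 <= uw 4 k.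
Proof.
move=> hk; have := @s_mid 4 k isT hk.
rewrite /uw /ind /=; case: k hk => [|[|k]] //= _; lra.
Qed.
End Num.

Set Implicit Arguments. Unset Strict Implicit. Unset Printing Implicit Defensive.
Section Graph.
Variables (T : finType) (e : rel T).
Hypothesis esym : symmetric e.
Hypothesis eirr : irreflexive e.

Local Notation L := (line_vertex e).
Local Notation NB x := [set y | e x y].
Local Notation degL := (deg (@line_adj T e)).

Lemma le1_eq (A : {set T}) x y : (#|A| <= 1)%N -> x \in A -> y \in A -> x = y.
Proof. by move/card_le1_eqP => h xA yA; apply: h. Qed.

Lemma le2_eq (A : {set T}) x y z : (#|A| <= 2)%N -> x \in A -> y \in A -> z \in A ->
  x != y -> z = x \/ z = y.
Proof.
move=> h xA yA zA xy; case: (z =P x) => [->|zx]; [by left|right].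
apply: (@le1_eq (A :\ x)).
- by move: h; rewrite (cardsD1 x A) xA; lia.
- by rewrite !inE zA andbT; apply/eqP.
- by rewrite !inE yA andbT eq_sym.
Qed.

Lemma edge_rep (E : L) : exists a b, e a b /\ val E = [set a; b].
Proof.
have := valP E; rewrite inE => /existsP[a /existsP[b /andP[hab /eqP h]]].
by exists a, b.
Qed.

Lemma nin2 (p y a b : T) : y \notin [set a; b] -> [set p; y] != [set a; b].
Proof. by apply: contra => /eqP <-; rewrite !inE eqxx orbT. Qed.

Lemma deg_line (E : L) a b : e a b -> val E = [set a; b] ->
  (degL E + 2 = deg e a + deg e b)%N.
Proof.
move=> hab hE.
have mk : forall p y, e p y -> p \in [set a; b] -> [set p; y] != [set a; b] ->
    [set p; y] \in val @: [set F | line_adj E F].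
  move=> p y hpy pab hne.
  have hX : [set p; y] \in edge_set e.
    by rewrite inE; apply/existsP; exists p; apply/existsP; exists y; rewrite hpy eqxx.
  apply/imsetP; exists (Sub [set p; y] hX : L); last by rewrite SubK.
  rewrite inE /line_adj; apply/andP; split.
    by apply: contra hne => /eqP/(congr1 val); rewrite SubK hE => ->.
  by apply/set0Pn; exists p; rewrite inE SubK hE pab !inE eqxx.
have key : val @: [set F | line_adj E F] =
    [set [set a; y] | y in NB a :\ b] :|: [set [set b; y] | y in NB b :\ a].
  apply/setP => X; apply/idP/idP.
    case/imsetP => F; rewrite inE => /andP[hne hint] ->{X}.
    have [x [y [hxy hF]]] := edge_rep F.
    have hne' : [set x; y] != [set a; b].
      by rewrite -hF -hE; apply: contra hne => /eqP h; apply/eqP/val_inj.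
    have incase : forall x y, e x y -> [set x; y] != [set a; b] -> (x == a) || (x == b) ->
        [set x; y] \in [set [set a; y] | y in NB a :\ b] :|: [set [set b; y] | y in NB b :\ a].
      move=> x1 y1 h1 hn /orP[/eqP xa|/eqP xb]; subst x1; rewrite inE; apply/orP;
        [left|right]; apply/imsetP; exists y1 => //; rewrite !inE h1 andbT.
        by apply: contra hn => /eqP ->.
      by apply: contra hn => /eqP ->; rewrite setUC.
    case/set0Pn: hint => z; rewrite inE => /andP[zE zF].
    rewrite hE !inE in zE; rewrite hF !inE in zF.
    rewrite hF; case/orP: zF => /eqP zx; subst z.
      by apply: incase.
    by rewrite setUC; apply: incase; rewrite 1?esym // setUC.
  rewrite inE => /orP[] /imsetP[y]; rewrite !inE => /andP[yb ay] ->.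
    apply: mk => //; first by rewrite !inE eqxx.
    by apply: nin2; rewrite !inE negb_or yb andbT; apply: contraTneq ay => ->; rewrite eirr.
  apply: mk => //; first by rewrite !inE eqxx orbT.
  by apply: nin2; rewrite !inE negb_or yb /=; apply: contraTneq ay => ->; rewrite eirr.
have disj : [set [set a; y] | y in NB a :\ b] :&: [set [set b; y] | y in NB b :\ a] = set0.
  apply/setP => X; rewrite !inE; apply/negP => /andP[/imsetP[y1 h1 ->] /imsetP[y2 h2 h]].
  have : b \in [set a; y1] by rewrite h !inE eqxx.
  rewrite !inE => /orP[/eqP ba | /eqP by1].
    by move: hab; rewrite ba eirr.
  by move: h1; rewrite !inE by1 eqxx.
rewrite /deg -(card_imset _ val_inj) key cardsU disj cards0 subn0 !card_in_imset.
- rewrite (cardsD1 b (NB a)) (cardsD1 a (NB b)) !inE hab esym hab /=; lia.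
- move=> y1 y2; rewrite !inE => /andP[_ ay1] /andP[_ ay2] h.
  have : y1 \in [set b; y2] by rewrite -h !inE eqxx orbT.
  rewrite !inE => /orP[/eqP y1a|/eqP //].
  by move: ay1; rewrite y1a eirr.
- move=> y1 y2; rewrite !inE => /andP[_ ay1] /andP[_ ay2] h.
  have : y1 \in [set a; y2] by rewrite -h !inE eqxx orbT.
  rewrite !inE => /orP[/eqP y1a|/eqP //].
  by move: ay1; rewrite y1a eirr.
Qed.
Lemma deg_pos a b : e a b -> (0 < deg e a)%N.
Proof. by move=> hab; apply/card_gt0P; exists b; rewrite inE. Qed.

Lemma pend (F E : L) : degL F = 1%N -> line_adj F E -> exists p q w,
  [/\ val F = [set p; q], val E = [set q; w], deg e p = 1%N, deg e q = 2%N &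
      [/\ e q w, w != p & e p q]].
Proof.
move=> hdF hadj.
have gen : forall a b, e a b -> val F = [set a; b] -> deg e a = 1%N -> deg e b = 2%N ->
    exists p q w, [/\ val F = [set p; q], val E = [set q; w], deg e p = 1%N, deg e q = 2%N &
      [/\ e q w, w != p & e p q]].
  move=> a b hab hF da db.
  have [x [y [hxy hE]]] := edge_rep E.
  move: hadj; rewrite /line_adj => /andP[hne /set0Pn[z]].
  have hne' : val F != val E by apply: contra hne => /eqP h; apply/eqP/val_inj.
  move=> hz; rewrite inE hF hE !inE in hz; case/andP: hz => zab zxy.
  have gen2 : forall x y, e x y -> val E = [set x; y] -> (x == a) || (x == b) ->
      exists p q w, [/\ val F = [set p; q], val E = [set q; w], deg e p = 1%N, deg e q = 2%N &
        [/\ e q w, w != p & e p q]].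
    move=> x1 y1 h1 hE1 /orP[/eqP xa|/eqP xb]; subst x1.
      have yb : y1 = b.
        by apply: (@le1_eq (NB a)); rewrite ?inE // -/(deg e a) da.
      by move: hne'; rewrite hF hE1 yb eqxx.
    exists a, b, y1; split => //; split => //.
    by apply: contra hne' => /eqP ya; rewrite hF hE1 ya setUC.
  case/orP: zxy => /eqP zx.
    by apply: (gen2 x y hxy hE); rewrite -zx.
  by apply: (gen2 y x); [rewrite esym | rewrite hE setUC | rewrite -zx].
have [a [b [hab hF]]] := edge_rep F.
have := deg_line hab hF; rewrite hdF.
have hba : e b a by rewrite esym.
have := deg_pos hab; have := deg_pos hba => pb pa h.
case: (deg e a =P 1%N) => da.
  by apply: (gen a b) => //; lia.
by apply: (gen b a) => //; [rewrite hF setUC | lia | lia].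
Qed.
Lemma degL_le6 (E : L) : (forall x, deg e x <= 4)%N -> (degL E <= 6)%N.
Proof.
move=> hmax; have [a [b [hab hE]]] := edge_rep E.
have := deg_line hab hE; have := hmax a; have := hmax b; lia.
Qed.

Lemma pend_nb (F E : L) : (forall x, deg e x <= 4)%N ->
  degL F = 1%N -> line_adj F E -> (degL E <= 4)%N.
Proof.
move=> hmax hF hadj; have [p [q [w [_ hE _ dq [hqw _ _]]]]] := pend hF hadj.
have := deg_line hqw hE; have := hmax w; lia.
Qed.

Lemma claw (E F1 F2 : L) : degL E = 4%N -> line_adj F1 E -> line_adj F2 E ->
  degL F1 = 1%N -> degL F2 = 1%N -> F1 = F2.
Proof.
move=> hE4 h1 h2 d1 d2.
have [p1 [q1 [w1 [hF1 hE1 dp1 dq1 [hqw1 wp1 hpq1]]]]] := pend d1 h1.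
have [p2 [q2 [w2 [hF2 hE2 dp2 dq2 [hqw2 wp2 hpq2]]]]] := pend d2 h2.
have dw1 : deg e w1 = 4%N by have := deg_line hqw1 hE1; lia.
have dw2 : deg e w2 = 4%N by have := deg_line hqw2 hE2; lia.
have : q2 \in val E by rewrite hE2 !inE eqxx.
rewrite hE1 !inE => /orP[/eqP qq|/eqP qw]; last by move: dq2; rewrite qw dw1.
subst q2.
have hA : (#|NB q1| <= 2)%N by rewrite -/(deg e q1) dq1.
have pw : p1 != w1 by apply/eqP => pw; move: dp1; rewrite pw dw1.
have hqp1 : e q1 p1 by rewrite esym.
have hqp2 : e q1 p2 by rewrite esym.
have m1 : p1 \in NB q1 by rewrite inE.
have m2 : w1 \in NB q1 by rewrite inE.
have m3 : p2 \in NB q1 by rewrite inE.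
have [pp|pw2] := le2_eq hA m1 m2 m3 pw.
  by apply: val_inj; rewrite hF1 hF2 pp.
by move: dp2; rewrite pw2 dw1.
Qed.
Lemma exists_out (A : {set T}) : (#|A| < #|T|)%N -> exists w, w \notin A.
Proof.
move=> h; have : (0 < #|~: A|)%N by have := cardsC A; lia.
by case/card_gt0P => w; rewrite inE => hw; exists w.
Qed.

Lemma two_nb : connected_graph e -> (3 <= #|T|)%N ->
  exists u y z, [/\ e u y, e u z & y != z].
Proof.
move=> hconn hT.
case: (pickP (fun t : T * T * T => [&& e t.1.1 t.1.2, e t.1.1 t.2 & t.1.2 != t.2])).
  by case=> [[u y] z] /and3P[h1 h2 h3]; exists u, y, z.
move=> H.
have one : forall u y z, e u y -> e u z -> y = z.
  move=> u y z h1 h2; have := H (u, y, z); rewrite /= h1 h2 /=.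
  by move/negbFE/eqP.
have hT0 : (0 < #|T|)%N by lia.
case/card_gt0P: hT0 => x _.
have [w0 hw0] : exists w, w \notin [set x] by apply: exists_out; rewrite cards1; lia.
have : connect e x w0 := hconn x w0.
case/connectP => [[|x1 p] /= hp hw].
  by move: hw0; rewrite hw !inE eqxx.
case/andP: hp => hx1 _.
have hcl : closed e [set x; x1].
  have dir : forall u v, e u v -> u \in [set x; x1] -> v \in [set x; x1].
    move=> u v huv; rewrite !inE => /orP[/eqP ux|/eqP ux1].
      by rewrite ux in huv; rewrite (one _ _ _ huv hx1) eqxx orbT.
    have hx1x : e x1 x by rewrite esym.
    by rewrite ux1 in huv; rewrite (one _ _ _ huv hx1x) eqxx.
  move=> u v huv; apply/idP/idP; first exact: dir.
  by apply: dir; rewrite esym.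
have [w hw'] : exists w, w \notin [set x; x1].
  by apply: exists_out; rewrite cards2; lia.
have := closed_connect hcl (hconn x w).
by rewrite (negbTE hw') !inE eqxx.
Qed.

Lemma exists_ladj : connected_graph e -> (3 <= #|T|)%N ->
  exists E F : L, line_adj E F.
Proof.
move=> hconn hT; have [u [y [z [h1 h2 hyz]]]] := two_nb hconn hT.
have hX1 : [set u; y] \in edge_set e.
  by rewrite inE; apply/existsP; exists u; apply/existsP; exists y; rewrite h1 eqxx.
have hX2 : [set u; z] \in edge_set e.
  by rewrite inE; apply/existsP; exists u; apply/existsP; exists z; rewrite h2 eqxx.
exists (Sub [set u; y] hX1), (Sub [set u; z] hX2).
rewrite /line_adj; apply/andP; split.
  apply/negP => /eqP/(congr1 val); rewrite !SubK => h.
  have : z \in [set u; y] by rewrite h !inE eqxx orbT.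
  rewrite !inE => /orP[/eqP zu|/eqP zy].
    by move: h2; rewrite zu eirr.
  by move: hyz; rewrite zy eqxx.
by apply/set0Pn; exists u; rewrite !SubK !inE eqxx.
Qed.
End Graph.

Theorem theorem3p2 (R : rcfType) (T : finType) (e : rel T) :
  simple_graph e -> connected_graph e ->
  (forall x : T, (deg e x <= 4)%N) -> (3 <= #|T|)%N ->
  forall (U : finType) (g : rel U) (f : U -> line_vertex e),
    bijective f -> (forall u v : U, g u v = line_adj (f u) (f v)) ->
    ABC R g < GA R g.
Proof.
move=> [esym eirr] hconn hmax hT U g f fbij hg.
have finj : injective f := bij_inj fbij.
case: (fbij) => f' fK f'K.
have gsym : symmetric g by move=> u v; rewrite !hg /line_adj eq_sym setIC.
have degU : forall u, deg g u = deg (@line_adj T e) (f u).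
  move=> u; rewrite /deg -(card_imset _ finj).
  suff -> : f @: [set v | g u v] = [set F | line_adj (f u) F] by [].
  apply/setP => F; rewrite inE; apply/imsetP/idP.
    by case=> v hv ->; rewrite inE in hv; rewrite -hg.
  by move=> hF; exists (f' F); rewrite ?inE ?hg f'K.
have hA : forall u, (deg g u <= 6)%N by move=> u; rewrite degU; apply: degL_le6.
have hB : forall x y, g x y -> deg g x = 1%N -> (deg g y <= 4)%N.
  by move=> x y hxy; rewrite !degU => h; apply: (pend_nb esym eirr hmax h); rewrite -hg.
have hC : forall x y z, deg g x = 4%N -> g x y -> g x z -> deg g y = 1%N ->
    deg g z = 1%N -> y = z.
  move=> x y z; rewrite !degU => h4 hy hz h1 h2; apply: finj.
  by apply: (claw esym eirr h4 _ _ h1 h2); rewrite -hg gsym.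
have hpos : forall x y, g x y -> (0 < deg g x)%N.
  by move=> x y hxy; apply/card_gt0P; exists y; rewrite inE.
have [x0 [y0 h0]] : exists x y, g x y.
  have [E [F hEF]] := exists_ladj esym eirr hconn hT.
  by exists (f' E), (f' F); rewrite hg !f'K.
pose S x := \sum_(y | g x y) uw R (deg g x) (deg g y).
have termpos : forall x y, g x y ->
    ~~ ((deg g x == 4%N) && [exists y, g x y && (deg g y == 1%N)]) ->
    0 < uw R (deg g x) (deg g y).
  move=> x y hy hn; apply: u_pos.
  - by rewrite (hpos _ _ hy) hA.
  - by rewrite (hpos y x) ?hA // gsym.
  - by apply/implyP => /eqP; apply: hB.
  - by apply/implyP => /eqP; apply: hB; rewrite gsym.
  - apply: contra hn => /andP[-> h]; rewrite andTb; apply/existsP; exists y.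
    by rewrite hy h.
have Sgt : forall x y, g x y -> 0 < S x.
  move=> x y hy.
  case: (boolP ((deg g x == 4%N) && [exists y, g x y && (deg g y == 1%N)])).
    case/andP => /eqP dx4 /existsP[y1 /andP[hy1 /eqP dy1]].
    rewrite /S (eq_bigl (fun y => y \in [set y | g x y])); last by move=> z; rewrite inE.
    rewrite (big_setD1 y1) ?inE //= dx4 dy1.
    have hcard : #|[set y | g x y] :\ y1| = 3%N.
      by have := cardsD1 y1 [set y | g x y]; rewrite inE hy1 -/(deg g x) dx4; lia.
    have : \sum_(i in [set y | g x y] :\ y1) (1/8 : R) <=
           \sum_(i in [set y | g x y] :\ y1) uw R 4 (deg g i).
      apply: ler_sum => z; rewrite !inE => /andP[hz1 hz]; apply: u4k.
      have : deg g z != 1%N.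
        by apply/eqP => dz; move: hz1; rewrite (hC x z y1 dx4 hz hy1 dz dy1) eqxx.
      by have := hA z; have := hpos z x; rewrite gsym hz; lia.
    rewrite sumr_const hcard => hs; have h41 := @u41 R.
    have e38 : (1/8 : R) *+ 3 = 3/8 by rewrite -mulr_natr; lra.
    lra.
  move=> hn; rewrite /S (bigD1 y) //=.
  have := termpos x y hy hn.
  have : 0 <= \sum_(i | g x i && (i != y)) uw R (deg g x) (deg g i).
    by apply: sumr_ge0 => z /andP[hz _]; apply: ltW; apply: termpos.
  lra.
have Sge : forall x, 0 <= S x.
  move=> x; case: (pickP (g x)) => [y hy|none]; first exact: ltW (Sgt x y hy).
  by rewrite /S big_pred0.
have E2 : \sum_x \sum_(y | g x y) ind R (deg g x) (deg g y) =
          \sum_x \sum_(y | g x y) ind R (deg g y) (deg g x).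
  transitivity (\sum_x \sum_y (if g x y then ind R (deg g x) (deg g y) else 0)).
    by apply: eq_bigr => x _; rewrite big_mkcond.
  rewrite exchange_big /=; apply: eq_bigr => y _; rewrite [RHS]big_mkcond.
  by apply: eq_bigr => x _; rewrite gsym.
have E3 : \sum_x S x = \sum_x \sum_(y | g x y) sw R (deg g x) (deg g y).
  rewrite /S /uw.
  under eq_bigr do rewrite sumrB big_split.
  by rewrite sumrB big_split E2 addrK.
have Epos : 0 < \sum_x S x.
  rewrite (bigD1 x0) //=.
  have := Sgt x0 y0 h0.
  have : 0 <= \sum_(i | i != x0) S i by apply: sumr_ge0 => i _; apply: Sge.
  lra.
have E1 : GA R g - ABC R g = 2^-1 * \sum_x \sum_(y | g x y) sw R (deg g x) (deg g y).
  rewrite /GA /ABC /edge_sum -mulrBr -sumrB; congr (_ * _).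
  by apply: eq_bigr => x _; rewrite -sumrB.
rewrite -subr_gt0 E1 -E3; apply: mulr_gt0 => //; lra.
Qed.
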